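(* Let $\mathbf{A}=(A_{i,j})_{p\times p}$ be a deterministic symmetric $\{0,1\}$-valued matrix with zero diagonal, $\delta=\frac{2}{p(p-1)}\sum_{i<j}A_{i,j}$ its edge density, and $N=p(p-1)/2$. Let $\mathbf{Y},\mathbf{Y}_*$ be independent and identically distributed symmetric random matrices with zero diagonal, each generated as $Y_{i,j}=A_{i,j}I(\varepsilon_{i,j}=0)+I(\varepsilon_{i,j}=1)$ for $i\neq j$, where $\varepsilon_{i,j}=\varepsilon_{j,i}$, $\mathbb{P}(\varepsilon_{i,j}=1)=\alpha$, $\mathbb{P}(\varepsilon_{i,j}=0)=1-\alpha-\beta$, $\mathbb{P}(\varepsilon_{i,j}=-1)=\beta$ for all $i<j$, and $\{\varepsilon_{i,j}\}_{i<j}$ are independent. Let $\hat u_1=\frac{2}{p(p-1)}\sum_{i<j}Y_{i,j}$ and $\hat u_2=\frac{1}{p(p-1)}\sum_{i<j}|Y_{i,j,*}-Y_{i,j}|$. Define \[ \hat\beta=\frac{\hat u_2-\alpha+\hat u_1\alpha}{\hat u_1-\alpha},\qquad \hat\delta=\frac{(\hat u_1-\alpha)^2}{\hat u_1-\hat u_2-2\hat u_1\alpha+\alpha^2} \] (for use when $\alpha$ is known) and \[ \hat\alpha=\frac{\hat u_1\beta-\hat u_2}{\hat u_1+\beta-1},\qquad \hat\delta=\frac{\hat u_1^2-\hat u_1+\hat u_2}{\hat u_1+\hat u_2-2\hat u_1\beta-(1-\beta)^2} \] (for use when $\beta$ is known). Consider $p\to\infty$ (with $\mathbf{A}$, $\delta$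 and possibly $\alpha,\beta$ depending on $p$), and suppose $N_1=p(p-1)\delta\to\infty$ and $N_2=p(p-1)(1-\delta)\to\infty$. Then (i) if $\alpha$ is known and $\delta(1-\alpha-\beta)^2\ge c$ for some positive constant $c$, the first pair satisfies $\hat\beta=\beta+O_p(N^{-1/2})$ and $\hat\delta=\delta+O_p(N^{-1/2})$; (ii) if $\beta$ is known and $(1-\delta)(1-\alpha-\beta)^2\ge c$ for some positive constant $c$, the second pair satisfies $\hat\alpha=\alpha+O_p(N^{-1/2})$ and $\hat\delta=\delta+O_p(N^{-1/2})$.
   Context: $\alpha$ and $\beta$ are the error rates: $\mathbb{P}(Y_{i,j}=1\mid A_{i,j}=0)=\alpha$, $\mathbb{P}(Y_{i,j}=0\mid A_{i,j}=1)=\beta$. *)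

(* Defs.v *)
From HB Require Import structures.
From mathcomp Require Import all_boot all_order all_algebra.
From mathcomp Require Import reals.
Unset Printing Implicit Defensive.
Import Order.TTheory GRing.Theory Num.Theory.
Local Open Scope ring_scope.

(* The noise variable eps_{i,j} in {1,0,-1} is encoded by e : 'I_3 with
   e = 0 <-> eps = 0,  e = 1 <-> eps = 1,  e = 2 <-> eps = -1. *)

Definition eps_pmf (R : realType) (al be : R) (e : 'I_3) : R :=
  if nat_of_ord e == 0%N then 1 - al - be
  else if nat_of_ord e == 1%N then al else be.

Definition Yval (R : realType) (a : bool) (e : 'I_3) : R :=
  if nat_of_ord e == 1%N then 1
  else if nat_of_ord e == 0%N then (a : nat)%:R else 0.

(* Sample space for a given p: the noise of Y (first component) and of the
   independent copy Y_* (second component); only entries (i,j) with i < j are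
   random, the others are fixed (to code 0) with probability one. *)
Definition Omega (p : nat) : finType :=
  ({ffun 'I_p * 'I_p -> 'I_3} * {ffun 'I_p * 'I_p -> 'I_3})%type.

Definition site_weight (R : realType) (p : nat) (al be : R)
    (k : 'I_p * 'I_p) (e : 'I_3) : R :=
  if (k.1 < k.2)%N then eps_pmf R al be e else (nat_of_ord e == 0%N)%:R.

Definition weight (R : realType) (p : nat) (al be : R) (w : Omega p) : R :=
  \prod_(k : 'I_p * 'I_p) (site_weight R p al be k (w.1 k) * site_weight R p al be k (w.2 k)).

Definition Prob (R : realType) (p : nat) (al be : R) (E : pred (Omega p)) : R :=
  \sum_(w : Omega p | E w) weight R p al be w.

Definition Nn (R : realType) (p : nat) : R := (p * p.-1)%N%:R / 2.

Definition delta (R : realType) (A : forall p : nat, 'I_p -> 'I_p -> bool) (p : nat) : R :=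
  2 / (p * p.-1)%N%:R * \sum_(k : 'I_p * 'I_p | (k.1 < k.2)%N) (A p k.1 k.2 : nat)%:R.

Definition u1hat (R : realType) (A : forall p : nat, 'I_p -> 'I_p -> bool) (p : nat)
    (w : Omega p) : R :=
  2 / (p * p.-1)%N%:R *
    \sum_(k : 'I_p * 'I_p | (k.1 < k.2)%N) Yval R (A p k.1 k.2) (w.1 k).

Definition u2hat (R : realType) (A : forall p : nat, 'I_p -> 'I_p -> bool) (p : nat)
    (w : Omega p) : R :=
  1 / (p * p.-1)%N%:R *
    \sum_(k : 'I_p * 'I_p | (k.1 < k.2)%N)
      `|Yval R (A p k.1 k.2) (w.2 k) - Yval R (A p k.1 k.2) (w.1 k)|.

(* estimators (division by 0 follows MathComp's convention x / 0 = 0) *)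
Definition beta_hat (R : realType) (al u1 u2 : R) : R :=
  (u2 - al + u1 * al) / (u1 - al).
Definition delta_hat_alpha (R : realType) (al u1 u2 : R) : R :=
  (u1 - al) ^+ 2 / (u1 - u2 - 2 * u1 * al + al ^+ 2).
Definition alpha_hat (R : realType) (be u1 u2 : R) : R :=
  (u1 * be - u2) / (u1 + be - 1).
Definition delta_hat_beta (R : realType) (be u1 u2 : R) : R :=
  (u1 ^+ 2 - u1 + u2) / (u1 + u2 - 2 * u1 * be - (1 - be) ^+ 2).

Definition tends_to_infty (R : realType) (f : nat -> R) : Prop :=
  forall M : R, exists P0 : nat, forall p : nat, (P0 <= p)%N -> M < f p.

Definition OpN (R : realType) (al be : nat -> R) (X : forall p : nat, Omega p -> R) : Prop :=
  forall eta : R, 0 < eta ->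
  exists M : R, 0 < M /\
  exists P0 : nat, forall p : nat, (P0 <= p)%N ->
    Prob R p (al p) (be p) (fun w : Omega p => M / Num.sqrt (Nn R p) < `|X p w|) <= eta.

(* Main.v *)
Require Import Defs.
From HB Require Import structures.
From mathcomp Require Import all_boot all_order all_algebra.
From mathcomp Require Import reals.
From mathcomp Require Import ring lra zify.
Import Order.TTheory GRing.Theory Num.Theory.

Definition cntS (n : nat) : nat := \sum_(0 <= i < n) \sum_(0 <= j < n) (i < j)%N.

Lemma cntS_S n : cntS n.+1 = (cntS n + n)%N.
Proof.
rewrite /cntS big_nat_recr //=.
rewrite (eq_bigr (fun i => (\sum_(0 <= j < n) (i < j) + (i < n))%N)); last first.
  by move=> i _; rewrite big_nat_recr.
rewrite big_split /=.
have -> : \sum_(0 <= j < n.+1) (n < j)%N = 0%N.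
  by rewrite big1_seq // => j; rewrite mem_index_iota => /andP [_ hj]; have/negbTE -> : ~~ (n < j)%N by lia.
have -> : \sum_(0 <= i < n) (i < n)%N = n.
  rewrite (eq_big_seq (fun _ => 1%N)); first by rewrite sum_nat_const_nat muln1 subn0.
  by move=> i; rewrite mem_index_iota => /andP [_ ->].
by rewrite addn0 addnC.
Qed.

Lemma cntS_eq n : (cntS n * 2 = n * n.-1)%N.
Proof.
elim: n => [|n IH]; first by rewrite /cntS big_geq.
rewrite cntS_S mulnDl IH /=; case: n {IH} => [|n] //=; lia.
Qed.

Local Open Scope ring_scope.

Lemma sum_I3 (R : realType) (F : 'I_3 -> R) :
  (\sum_(a : 'I_3) F a)%R = (F (@Ordinal 3 0 isT) + F (@Ordinal 3 1 isT) + F (@Ordinal 3 2 isT))%R.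
Proof.
rewrite !big_ord_recl big_ord0 addr0 addrA.
by congr (F _ + F _ + F _); apply: val_inj.
Qed.

Lemma countS (R : realType) (p : nat) :
  \sum_(k : 'I_p * 'I_p | (k.1 < k.2)%N) (1 : R) = Nn R p.
Proof.
rewrite -(pair_big_dep xpredT (fun (i j : 'I_p) => (i < j)%N) (fun _ _ => (1:R))) /=.
have -> : \sum_(i < p) \sum_(j < p | (i < j)%N) (1:R) = (cntS p)%:R.
  rewrite /cntS natr_sum big_mkord; apply: eq_bigr => i _.
  rewrite natr_sum big_mkord big_mkcond /=; apply: eq_bigr => j _.
  by case: (i < j)%N.
rewrite /Nn -cntS_eq natrM mulfK //.
by rewrite pnatr_eq0.
Qed.

Local Open Scope ring_scope.

Definition Ek (R : realType) p (al be : R) (k : 'I_p * 'I_p) (f : 'I_3 -> 'I_3 -> R) : R :=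
  \sum_(a : 'I_3) \sum_(b : 'I_3) site_weight R p al be k a * site_weight R p al be k b * f a b.
Definition Ex (R : realType) p (al be : R) (X : Omega p -> R) : R :=
  \sum_(w : Omega p) weight R p al be w * X w.

Lemma E_prod (R : realType) p (al be : R) (phi : 'I_p * 'I_p -> 'I_3 -> 'I_3 -> R) :
  Ex R p al be (fun w => \prod_k phi k (w.1 k) (w.2 k)) = \prod_k Ek R p al be k (phi k).
Proof.
rewrite /Ex /weight /Omega.
transitivity (\sum_(w : {ffun 'I_p * 'I_p -> 'I_3} * {ffun 'I_p * 'I_p -> 'I_3}) \prod_k
   (site_weight R p al be k (w.1 k) * site_weight R p al be k (w.2 k) * phi k (w.1 k) (w.2 k))).
  apply: eq_bigr => w _. rewrite -big_split /=. done.
rewrite -(pair_bigA _ (fun (w1 w2 : {ffun 'I_p * 'I_p -> 'I_3}) => \prod_k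
   (site_weight R p al be k (w1 k) * site_weight R p al be k (w2 k) * phi k (w1 k) (w2 k)))) /=.
under eq_bigr => w1 _ do rewrite -(bigA_distr_bigA (fun k b =>
   site_weight R p al be k (w1 k) * site_weight R p al be k b * phi k (w1 k) b)).
rewrite -(bigA_distr_bigA (fun k a => \sum_b
   site_weight R p al be k a * site_weight R p al be k b * phi k a b)).
by [].
Qed.

Lemma Ek_ext (R : realType) p (al be : R) k (f f' : 'I_3 -> 'I_3 -> R) :
  (forall a b, f a b = f' a b) -> Ek R p al be k f = Ek R p al be k f'.
Proof. by move=> h; apply: eq_bigr => a _; apply: eq_bigr => b _; rewrite h. Qed.

Lemma Ex_ext (R : realType) p (al be : R) (X X' : Omega p -> R) :
  (forall w, X w = X' w) -> Ex R p al be X = Ex R p al be X'.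
Proof. by move=> h; apply: eq_bigr => w _; rewrite h. Qed.

Lemma Ex_sum (R : realType) p (al be : R) (I : finType) (F : I -> Omega p -> R) :
  Ex R p al be (fun w => \sum_i F i w) = \sum_i Ex R p al be (F i).
Proof.
rewrite /Ex; under eq_bigr do rewrite big_distrr /=.
exact: exchange_big.
Qed.

Lemma Ex_scale (R : realType) p (al be : R) c (X : Omega p -> R) :
  Ex R p al be (fun w => c * X w) = c * Ex R p al be X.
Proof.
rewrite /Ex big_distrr /=; apply: eq_bigr => w _; ring.
Qed.

Lemma prod_if1 (R : realType) (I : finType) (k : I) (G : I -> R) :
  \prod_m (if m == k then G m else 1) = G k.
Proof. by rewrite -big_mkcond big_pred1_eq. Qed.

Lemma Ex_var (R : realType) p (al be : R) (g : 'I_p * 'I_p -> 'I_3 -> 'I_3 -> R) :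
  (forall k, Ek R p al be k (g k) = 0) ->
  (forall k, Ek R p al be k (fun _ _ => 1) = 1) ->
  Ex R p al be (fun w => (\sum_k g k (w.1 k) (w.2 k)) ^+ 2) =
  \sum_k Ek R p al be k (fun a b => g k a b ^+ 2).
Proof.
move=> hmean hone.
transitivity (Ex R p al be (fun w => \sum_k \sum_l g k (w.1 k) (w.2 k) * g l (w.1 l) (w.2 l))).
  by apply: Ex_ext => w; rewrite expr2 big_distrlr.
rewrite Ex_sum; apply: eq_bigr => k _; rewrite Ex_sum.
rewrite (bigD1 k) //= big1 ?addr0.
  transitivity (Ex R p al be (fun w => \prod_m (fun m a b => if m == k then g m a b ^+ 2 else 1) m (w.1 m) (w.2 m))).
    by apply: Ex_ext => w /=; rewrite prod_if1 expr2.
  rewrite (E_prod R p al be (fun m a b => if m == k then g m a b ^+ 2 else 1)) (bigD1 k) //= big1 ?mulr1.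
    by apply: Ek_ext => a b; rewrite eqxx.
  move=> m hm; rewrite (negbTE hm); exact: hone.
move=> l hl.
transitivity (Ex R p al be (fun w => \prod_m (fun m a b => (if m == k then g m a b else 1) * (if m == l then g m a b else 1)) m (w.1 m) (w.2 m))).
  by apply: Ex_ext => w /=; rewrite big_split /= !prod_if1.
rewrite (E_prod R p al be (fun m a b => (if m == k then g m a b else 1) * (if m == l then g m a b else 1))) (bigD1 k) //=.
have -> : Ek R p al be k (fun a b => (if k == k then g k a b else 1) * (if k == l then g k a b else 1)) = 0.
  rewrite -(hmean k); apply: Ek_ext => a b.
  by rewrite eqxx eq_sym (negbTE hl) mulr1.
by rewrite mul0r.
Qed.

Lemma sw_ge0 (R : realType) p (al be : R) k a :
  0 <= al -> 0 <= be -> al + be <= 1 -> 0 <= site_weight R p al be k a.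
Proof.
move=> ha hb hab; rewrite /site_weight /eps_pmf.
case: (k.1 < k.2)%N; last by case: (nat_of_ord a == 0%N).
case: (nat_of_ord a == 0%N); first lra.
by case: (nat_of_ord a == 1%N).
Qed.

Lemma weight_ge0 (R : realType) p (al be : R) w :
  0 <= al -> 0 <= be -> al + be <= 1 -> 0 <= weight R p al be w.
Proof.
move=> ha hb hab; apply: prodr_ge0 => k _; apply: mulr_ge0; exact: sw_ge0.
Qed.

Lemma Ek_le (R : realType) p (al be : R) k (f f' : 'I_3 -> 'I_3 -> R) :
  0 <= al -> 0 <= be -> al + be <= 1 ->
  (forall a b, f a b <= f' a b) -> Ek R p al be k f <= Ek R p al be k f'.
Proof.
move=> ha hb hab h; apply: ler_sum => a _; apply: ler_sum => b _.
apply: ler_wpM2l => //; apply: mulr_ge0; exact: sw_ge0.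
Qed.

Lemma Ek_const (R : realType) p (al be : R) k c :
  Ek R p al be k (fun _ _ => c) = c * Ek R p al be k (fun _ _ => 1).
Proof.
rewrite /Ek big_distrr; apply: eq_bigr => a _; rewrite big_distrr; apply: eq_bigr => b _ /=.
ring.
Qed.

Lemma Ek_one (R : realType) p (al be : R) k : Ek R p al be k (fun _ _ => 1) = 1.
Proof.
rewrite /Ek !sum_I3 /site_weight.
case: (k.1 < k.2)%N; rewrite /eps_pmf /=; ring.
Qed.

Lemma cheb (R : realType) p (al be : R) (X : Omega p -> R) (e : R) :
  0 <= al -> 0 <= be -> al + be <= 1 -> 0 < e ->
  Prob R p al be (fun w => e < `|X w|) <= Ex R p al be (fun w => X w ^+ 2) / e ^+ 2.
Proof.
move=> ha hb hab he.
rewrite /Prob /Ex mulr_suml big_mkcond /=; apply: ler_sum => w _.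
have hw := weight_ge0 R p al be w ha hb hab.
have he2 : 0 < e ^+ 2 by rewrite exprn_gt0.
case: ifP => h.
  rewrite -mulrA; apply: ler_peMr => //.
  rewrite ler_pdivlMr // mul1r.
  have := normr_ge0 (X w); rewrite -[X w ^+ 2]real_normK ?num_real //; nra.
rewrite -mulrA mulr_ge0 // mulr_ge0 ?sqr_ge0 // invr_ge0 ltW //.
Qed.

Lemma union_bd (R : realType) p (al be : R) (E E1 E2 : pred (Omega p)) :
  0 <= al -> 0 <= be -> al + be <= 1 ->
  (forall w, E w -> E1 w || E2 w) ->
  Prob R p al be E <= Prob R p al be E1 + Prob R p al be E2.
Proof.
move=> ha hb hab h.
rewrite /Prob [X in X <= _]big_mkcond [X in _ <= X + _]big_mkcond [X in _ <= _ + X]big_mkcond.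
rewrite -big_split /=; apply: ler_sum => w _.
have hw := weight_ge0 R p al be w ha hb hab.
case: ifP => hE; last by case: (E1 w); case: (E2 w); rewrite ?addr0 ?add0r ?addr_ge0.
by move: (h w hE); case: (E1 w); case: (E2 w) => //= _; rewrite ?addr0 ?add0r // lerDl.
Qed.

Local Open Scope ring_scope.

Definition g1 (R : realType) p (Ap : 'I_p -> 'I_p -> bool) (al be : R) (k : 'I_p * 'I_p) (a b : 'I_3) : R :=
  if (k.1 < k.2)%N then Yval R (Ap k.1 k.2) a - ((Ap k.1 k.2 : nat)%:R * (1 - al - be) + al) else 0.

Definition g2 (R : realType) p (Ap : 'I_p -> 'I_p -> bool) (al be : R) (k : 'I_p * 'I_p) (a b : 'I_3) : R :=
  if (k.1 < k.2)%N then `|Yval R (Ap k.1 k.2) b - Yval R (Ap k.1 k.2) a|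
     - 2 * ((Ap k.1 k.2 : nat)%:R * (be * (1 - be)) + (1 - (Ap k.1 k.2 : nat)%:R) * (al * (1 - al))) else 0.

Lemma Ek_zero (R : realType) p (al be : R) k : Ek R p al be k (fun _ _ => 0) = 0.
Proof. by rewrite Ek_const mul0r. Qed.

Lemma g1_mean (R : realType) p Ap (al be : R) k : Ek R p al be k (g1 R p Ap al be k) = 0.
Proof.
rewrite /g1; case hk: (k.1 < k.2)%N; last exact: (Ek_zero R p al be k).
rewrite /Ek !sum_I3 /site_weight hk /eps_pmf /Yval /=.
case: (Ap k.1 k.2) => /=; ring.
Qed.

Lemma g2_mean (R : realType) p Ap (al be : R) k : Ek R p al be k (g2 R p Ap al be k) = 0.
Proof.
rewrite /g2; case hk: (k.1 < k.2)%N; last exact: (Ek_zero R p al be k).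
rewrite /Ek !sum_I3 /site_weight hk /eps_pmf /Yval /=.
case: (Ap k.1 k.2) => /=; rewrite ?subrr ?normr0 ?subr0 ?sub0r ?normrN ?normr1; ring.
Qed.

Lemma Yval_01 (R : realType) (x : bool) (a : 'I_3) : 0 <= Yval R x a <= 1.
Proof.
rewrite /Yval; case: (nat_of_ord a == 1%N); first by rewrite ler01 lexx.
case: (nat_of_ord a == 0%N); last by rewrite lexx ler01.
by case: x; rewrite /= ?lexx ?ler01.
Qed.

Lemma g1_sq (R : realType) p Ap (al be : R) k a b :
  0 <= al -> 0 <= be -> al + be <= 1 ->
  g1 R p Ap al be k a b ^+ 2 <= if (k.1 < k.2)%N then 1 else 0.
Proof.
move=> ha hb hab; rewrite /g1; case: ifP => hk; last by rewrite expr0n.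
have /andP [y0 y1] := Yval_01 R (Ap k.1 k.2) a.
case: (Ap k.1 k.2) y0 y1 => /= y0 y1; nra.
Qed.

Lemma g2_sq (R : realType) p Ap (al be : R) k a b :
  0 <= al -> 0 <= be -> al + be <= 1 ->
  g2 R p Ap al be k a b ^+ 2 <= if (k.1 < k.2)%N then 1 else 0.
Proof.
move=> ha hb hab; rewrite /g2; case: ifP => hk; last by rewrite expr0n.
have /andP [y0 y1] := Yval_01 R (Ap k.1 k.2) a.
have /andP [z0 z1] := Yval_01 R (Ap k.1 k.2) b.
have n0 := normr_ge0 (Yval R (Ap k.1 k.2) b - Yval R (Ap k.1 k.2) a).
have n1 : `|Yval R (Ap k.1 k.2) b - Yval R (Ap k.1 k.2) a| <= 1.
  rewrite ler_norml; apply/andP; split; lra.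
move: n0 n1; set n := `|_|; set m := 2 * _ => n0 n1.
have hm : 0 <= m <= 1.
  rewrite /m; case: (Ap k.1 k.2) => /=; rewrite ?mul1r ?mul0r ?subrr ?add0r ?addr0 ?subr0;
  apply/andP; split; nra.
case/andP: hm => m0 m1.
have h1 : 0 <= 1 - n + m by lra.
have h2 : 0 <= 1 + n - m by lra.
nra.
Qed.

Lemma var_bound (R : realType) p (al be : R) (g : 'I_p * 'I_p -> 'I_3 -> 'I_3 -> R) :
  0 <= al -> 0 <= be -> al + be <= 1 ->
  (forall k, Ek R p al be k (g k) = 0) ->
  (forall k a b, g k a b ^+ 2 <= if (k.1 < k.2)%N then 1 else 0) ->
  Ex R p al be (fun w => (\sum_k g k (w.1 k) (w.2 k)) ^+ 2) <= Nn R p.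
Proof.
move=> ha hb hab hm hsq.
rewrite Ex_var //; last by move=> k; exact: Ek_one.
rewrite -countS [X in _ <= X]big_mkcond /=; apply: ler_sum => k _.
apply: le_trans (Ek_le _ _ _ _ _ _ _ ha hb hab (hsq k)) _.
by rewrite Ek_const Ek_one mulr1; case: ifP.
Qed.

Local Open Scope ring_scope.

Definition u1t (R : realType) A p (al be : R) : R := al + delta R A p * (1 - al - be).
Definition u2t (R : realType) A p (al be : R) : R :=
  delta R A p * (be * (1 - be)) + (1 - delta R A p) * (al * (1 - al)).

Lemma sumA_eq (R : realType) (A : forall p : nat, 'I_p -> 'I_p -> bool) p :
  0 < Nn R p ->
  \sum_(k : 'I_p * 'I_p | (k.1 < k.2)%N) (A p k.1 k.2 : nat)%:R = Nn R p * delta R A p.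
Proof.
move=> hN; rewrite /delta; move: hN; rewrite /Nn => hN.
have hx : (p * p.-1)%N%:R != 0 :> R.
  apply/eqP => h; move: hN; rewrite h mul0r ltxx //.
field; by move: hx; rewrite natrM mulf_eq0 negb_or andbC.
Qed.

Lemma u1_decomp (R : realType) A p (al be : R) w : 0 < Nn R p ->
  u1hat R A p w - u1t R A p al be =
  (Nn R p)^-1 * \sum_k g1 R p (A p) al be k (w.1 k) (w.2 k).
Proof.
move=> hN.
have hx : Nn R p != 0 by rewrite gt_eqF.
rewrite /g1 -big_mkcond /= sumrB big_split /= -big_distrl /= sumA_eq //.
have -> : \sum_(k : 'I_p * 'I_p | (k.1 < k.2)%N) al = al * Nn R p.
  by rewrite -countS big_distrr /=; apply: eq_bigr => *; rewrite mulr1.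
rewrite /u1hat /u1t.
have -> : 2 / (p * p.-1)%N%:R = (Nn R p)^-1 :> R by rewrite /Nn invf_div.
field; exact: hx.
Qed.

Lemma u2_decomp (R : realType) A p (al be : R) w : 0 < Nn R p ->
  u2hat R A p w - u2t R A p al be =
  (2 * Nn R p)^-1 * \sum_k g2 R p (A p) al be k (w.1 k) (w.2 k).
Proof.
move=> hN.
have hx : Nn R p != 0 by rewrite gt_eqF.
rewrite /g2 -big_mkcond /= sumrB -big_distrr /= big_split /= -!big_distrl /= sumrB.
rewrite sumA_eq //.
have -> : \sum_(k : 'I_p * 'I_p | (k.1 < k.2)%N) (1 : R) = Nn R p by rewrite countS.
rewrite /u2hat /u2t.
have -> : 1 / (p * p.-1)%N%:R = (2 * Nn R p)^-1 :> R.
  have h2 : 2 * Nn R p = (p * p.-1)%N%:R by rewrite /Nn mulrC divfK // pnatr_eq0.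
  by rewrite h2 mul1r.
field; exact: hx.
Qed.

Lemma P_bound (R : realType) p (al be : R) (D : Omega p -> R) (c : R) (g : 'I_p * 'I_p -> 'I_3 -> 'I_3 -> R) (K : R) :
  0 <= al -> 0 <= be -> al + be <= 1 -> 0 < Nn R p -> 0 < K -> c ^+ 2 * Nn R p <= (Nn R p)^-1 ->
  (forall k, Ek R p al be k (g k) = 0) ->
  (forall k a b, g k a b ^+ 2 <= if (k.1 < k.2)%N then 1 else 0) ->
  (forall w, D w = c * \sum_k g k (w.1 k) (w.2 k)) ->
  Prob R p al be (fun w => K / Num.sqrt (Nn R p) < `|D w|) <= K ^-2.
Proof.
move=> ha hb hab hN hK hcN hm hsq hD.
have hs : 0 < Num.sqrt (Nn R p) by rewrite sqrtr_gt0.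
have he : 0 < K / Num.sqrt (Nn R p) by rewrite divr_gt0.
apply: le_trans (cheb _ _ _ _ _ _ ha hb hab he) _.
have -> : Ex R p al be (fun w => D w ^+ 2) =
   c ^+ 2 * Ex R p al be (fun w => (\sum_k g k (w.1 k) (w.2 k)) ^+ 2).
  rewrite -Ex_scale; apply: Ex_ext => w; by rewrite hD exprMn.
have hV := var_bound R p al be g ha hb hab hm hsq.
have hE : c ^+ 2 * Ex R p al be (fun w => (\sum_k g k (w.1 k) (w.2 k)) ^+ 2) <= (Nn R p)^-1.
  apply: le_trans hcN; apply: ler_wpM2l => //; exact: sqr_ge0.
rewrite expr_div_n (sqr_sqrtr (ltW hN)).
have hK2 : 0 < K ^+ 2 by rewrite exprn_gt0.
have hN0 : Nn R p != 0 by rewrite gt_eqF.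
have hK0 : K != 0 by rewrite gt_eqF.
have -> : K ^-2 = (Nn R p)^-1 / (K ^+ 2 / Nn R p).
  field; by rewrite hN0 hK0.
apply: ler_wpM2r => //; rewrite invr_ge0 ltW // divr_gt0 //.
Qed.

Local Open Scope ring_scope.

Lemma ratio_bd (R : realType) (n d x c e C : R) :
  0 < c -> c / 2 <= `|d| -> `|n - x * d| <= C * e -> `|n / d - x| <= (2 * C / c) * e.
Proof.
move=> hc hd hn.
have hd0 : 0 < `|d| by apply: lt_le_trans hd; rewrite divr_gt0.
have dn0 : d != 0 by rewrite -normr_gt0.
have -> : n / d - x = (n - x * d) / d by field.
rewrite normrM normrV ?unitfE //.
rewrite ler_pdivrMr //.
have hCe : 0 <= C * e by apply: le_trans hn.
apply: le_trans hn _.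
have -> : 2 * C / c * e * `|d| = (C * e) * (2 * `|d| / c) by field; rewrite gt_eqF.
rewrite -[X in X <= _]mulr1; apply: ler_wpM2l => //.
by rewrite ler_pdivlMr // mul1r; lra.
Qed.

Lemma det_i_beta (R : realType) (al be dl D1 D2 e c : R) :
  0 <= al -> 0 <= be -> al + be <= 1 -> 0 <= dl <= 1 -> 0 < c ->
  c <= dl * (1 - al - be) ^+ 2 -> e <= c / 4 ->
  `|D1| <= e -> `|D2| <= e ->
  `|beta_hat R al (al + dl * (1 - al - be) + D1)
      (dl * (be * (1 - be)) + (1 - dl) * (al * (1 - al)) + D2) - be| <= (2 * 10 / c) * e.
Proof.
move=> ha hb hab /andP [d0 d1] hc hcd hec.
move=> hD1 hD2.
have /andP [h1 h2] : -e <= D1 <= e by rewrite -ler_norml.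
have /andP [h3 h4] : -e <= D2 <= e by rewrite -ler_norml.
rewrite /beta_hat; apply: (ratio_bd R _ _ _ _ _ (10:R)) => //.
  rewrite ler_normr; apply/orP; left.
  nra.
rewrite ler_norml; apply/andP; split; nra.
Qed.

Lemma det_i_delta (R : realType) (al be dl D1 D2 e c : R) :
  0 <= al -> 0 <= be -> al + be <= 1 -> 0 <= dl <= 1 -> 0 < c ->
  c <= dl * (1 - al - be) ^+ 2 -> 0 <= e -> e <= c / 4 ->
  `|D1| <= e -> `|D2| <= e ->
  `|delta_hat_alpha R al (al + dl * (1 - al - be) + D1)
      (dl * (be * (1 - be)) + (1 - dl) * (al * (1 - al)) + D2) - dl| <= (2 * 10 / c) * e.
Proof.
move=> ha hb hab /andP [d0 d1] hc hcd he0 hec.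
move=> hD1 hD2.
have /andP [h1 h2] : -e <= D1 <= e by rewrite -ler_norml.
have /andP [h3 h4] : -e <= D2 <= e by rewrite -ler_norml.
have s0 : 0 <= 1 - al - be by lra.
have s1 : 1 - al - be <= 1 by lra.
have s2 : (1 - al - be) ^+ 2 <= 1 by rewrite expr2; nra.
have s3 := sqr_ge0 (1 - al - be).
have hc1 : c <= 1 by nra.
have he1 : e <= 1 by lra.
rewrite /delta_hat_alpha; apply: (ratio_bd R _ _ _ _ _ (10:R)) => //.
  rewrite ler_normr; apply/orP; left.
  nra.
have -> : (al + dl * (1 - al - be) + D1 - al) ^+ 2 -
   dl * (al + dl * (1 - al - be) + D1 -
    (dl * (be * (1 - be)) + (1 - dl) * (al * (1 - al)) + D2) -
    2 * (al + dl * (1 - al - be) + D1) * al + al ^+ 2) =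
   2 * (dl * (1 - al - be)) * D1 + D1 * D1 - dl * (1 - 2 * al) * D1 + dl * D2 by ring.
have hP : 0 <= dl * (1 - al - be) <= 1 by apply/andP; split; nra.
have hQ : -1 <= dl * (1 - 2 * al) <= 1 by apply/andP; split; nra.
case/andP: hP => P0 P1; case/andP: hQ => Q0 Q1.
set P := dl * (1 - al - be) in P0 P1 *.
set Q := dl * (1 - 2 * al) in Q0 Q1 *.
rewrite ler_norml; apply/andP; split; nra.
Qed.

Lemma det_ii_alpha (R : realType) (al be dl D1 D2 e c : R) :
  0 <= al -> 0 <= be -> al + be <= 1 -> 0 <= dl <= 1 -> 0 < c ->
  c <= (1 - dl) * (1 - al - be) ^+ 2 -> e <= c / 4 ->
  `|D1| <= e -> `|D2| <= e ->
  `|alpha_hat R be (al + dl * (1 - al - be) + D1)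
      (dl * (be * (1 - be)) + (1 - dl) * (al * (1 - al)) + D2) - al| <= (2 * 10 / c) * e.
Proof.
move=> ha hb hab /andP [d0 d1] hc hcd hec.
move=> hD1 hD2.
have /andP [h1 h2] : -e <= D1 <= e by rewrite -ler_norml.
have /andP [h3 h4] : -e <= D2 <= e by rewrite -ler_norml.
rewrite /alpha_hat; apply: (ratio_bd R _ _ _ _ _ (10:R)) => //.
  rewrite ler_normr; apply/orP; right.
  nra.
rewrite ler_norml; apply/andP; split; nra.
Qed.

Lemma det_ii_delta (R : realType) (al be dl D1 D2 e c : R) :
  0 <= al -> 0 <= be -> al + be <= 1 -> 0 <= dl <= 1 -> 0 < c ->
  c <= (1 - dl) * (1 - al - be) ^+ 2 -> 0 <= e -> e <= c / 4 ->
  `|D1| <= e -> `|D2| <= e ->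
  `|delta_hat_beta R be (al + dl * (1 - al - be) + D1)
      (dl * (be * (1 - be)) + (1 - dl) * (al * (1 - al)) + D2) - dl| <= (2 * 10 / c) * e.
Proof.
move=> ha hb hab /andP [d0 d1] hc hcd he0 hec.
move=> hD1 hD2.
have /andP [h1 h2] : -e <= D1 <= e by rewrite -ler_norml.
have /andP [h3 h4] : -e <= D2 <= e by rewrite -ler_norml.
have s0 : 0 <= 1 - al - be by lra.
have s1 : 1 - al - be <= 1 by lra.
have s2 : (1 - al - be) ^+ 2 <= 1 by rewrite expr2; nra.
have s3 := sqr_ge0 (1 - al - be).
have hc1 : c <= 1 by nra.
have he1 : e <= 1 by lra.
rewrite /delta_hat_beta; apply: (ratio_bd R _ _ _ _ _ (10:R)) => //.
  rewrite ler_normr; apply/orP; right.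
  nra.
set u := al + dl * (1 - al - be).
have u0 : 0 <= u <= 1 by apply/andP; split; rewrite /u; nra.
case/andP: u0 => u0 u1.
have -> : (u + D1) ^+ 2 - (u + D1) + (dl * (be * (1 - be)) + (1 - dl) * (al * (1 - al)) + D2) -
  dl * (u + D1 + (dl * (be * (1 - be)) + (1 - dl) * (al * (1 - al)) + D2) -
   2 * (u + D1) * be - (1 - be) ^+ 2) =
  2 * u * D1 + D1 * D1 - D1 + D2 - dl * (1 - 2 * be) * D1 - dl * D2 by rewrite /u; ring.
have hQ : -1 <= dl * (1 - 2 * be) <= 1 by apply/andP; split; nra.
case/andP: hQ => Q0 Q1.
set Q := dl * (1 - 2 * be) in Q0 Q1 *.
rewrite ler_norml; apply/andP; split; nra.
Qed.

Local Open Scope ring_scope.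

Lemma eq_lex (R : realType) (x y : R) : x = y -> x <= y.
Proof. by move->. Qed.

Lemma delta_bd (R : realType) A p : 0 <= delta R A p <= 1.
Proof.
have hS0 : 0 <= \sum_(k : 'I_p * 'I_p | (k.1 < k.2)%N) (A p k.1 k.2 : nat)%:R :> R.
  by apply: sumr_ge0 => k _; rewrite ler0n.
have hS1 : \sum_(k : 'I_p * 'I_p | (k.1 < k.2)%N) (A p k.1 k.2 : nat)%:R <= Nn R p.
  rewrite -countS; apply: ler_sum => k _; by case: (A p k.1 k.2); rewrite /= ?lexx ?ler01.
have [hx|hx] := eqVneq ((p * p.-1)%N%:R : R) 0.
  by rewrite /delta hx invr0 mulr0 mul0r lexx ler01.
have hN : 0 < Nn R p by rewrite /Nn divr_gt0 // lt_neqAle eq_sym hx ler0n.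
have -> : delta R A p = (Nn R p)^-1 * \sum_(k : 'I_p * 'I_p | (k.1 < k.2)%N) (A p k.1 k.2 : nat)%:R.
  by rewrite /delta /Nn invf_div.
apply/andP; split; first by rewrite mulr_ge0 // invr_ge0 ltW.
by rewrite ler_pdivrMl // mulr1.
Qed.

Lemma eps_small (R : realType) A (c K : R) :
  tends_to_infty R (fun p : nat => (p * p.-1)%N%:R * delta R A p) ->
  0 < c -> 0 < K ->
  exists P, forall p, (P <= p)%N -> 0 < Nn R p /\ K / Num.sqrt (Nn R p) <= c / 4.
Proof.
move=> HN hc hK.
have [P HP] := HN (32 * K ^+ 2 / c ^+ 2).
exists P => p hp.
have h := HP p hp.
have /andP [d0 d1] := delta_bd R A p.
have hx : (32 * K ^+ 2 / c ^+ 2) < (p * p.-1)%N%:R.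
  apply: lt_le_trans h _; rewrite -[X in _ <= X]mulr1; apply: ler_wpM2l => //; exact: ler0n.
have hM : 0 < 32 * K ^+ 2 / c ^+ 2 by rewrite divr_gt0 ?mulr_gt0 ?exprn_gt0.
have hNe : 16 * K ^+ 2 / c ^+ 2 < Nn R p.
  rewrite /Nn; apply: le_lt_trans (_ : _ <= (32 * K ^+ 2 / c ^+ 2) / 2) _.
    by apply: eq_lex; field; rewrite gt_eqF.
  by rewrite ltr_pM2r // invr_gt0.
have hN : 0 < Nn R p.
  apply: lt_trans hNe; rewrite divr_gt0 ?mulr_gt0 ?exprn_gt0 //.
split => //.
have hs : 0 < Num.sqrt (Nn R p) by rewrite sqrtr_gt0.
have h4 : 4 * K / c <= Num.sqrt (Nn R p).
  have -> : 4 * K / c = Num.sqrt ((4 * K / c) ^+ 2).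
    by rewrite sqrtr_sqr ger0_norm // ltW // divr_gt0 ?mulr_gt0.
  rewrite ler_sqrt; last exact: ltW hN.
  apply: (le_trans _ (ltW hNe)).
  by apply: eq_lex; field; rewrite gt_eqF.
rewrite ler_pdivrMr //.
apply: (@le_trans _ _ (c / 4 * (4 * K / c))).
  by apply: eq_lex; field; rewrite gt_eqF.
by apply: ler_wpM2l => //; rewrite divr_ge0 // ltW.
Qed.

Lemma P_D1 (R : realType) A p (al be K : R) :
  0 <= al -> 0 <= be -> al + be <= 1 -> 0 < Nn R p -> 0 < K ->
  Prob R p al be (fun w => K / Num.sqrt (Nn R p) < `|u1hat R A p w - u1t R A p al be|) <= K ^-2.
Proof.
move=> ha hb hab hN hK.
apply: (P_bound R p al be _ ((Nn R p)^-1) (g1 R p (A p) al be) K) => //.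
- by rewrite expr2 -mulrA mulVf ?gt_eqF // mulr1.
- by move=> k; exact: g1_mean.
- by move=> k a b; exact: g1_sq.
- by move=> w; exact: u1_decomp.
Qed.

Lemma P_D2 (R : realType) A p (al be K : R) :
  0 <= al -> 0 <= be -> al + be <= 1 -> 0 < Nn R p -> 0 < K ->
  Prob R p al be (fun w => K / Num.sqrt (Nn R p) < `|u2hat R A p w - u2t R A p al be|) <= K ^-2.
Proof.
move=> ha hb hab hN hK.
apply: (P_bound R p al be _ ((2 * Nn R p)^-1) (g2 R p (A p) al be) K) => //.
- have -> : (2 * Nn R p)^-1 ^+ 2 * Nn R p = (Nn R p)^-1 / 4 by field; rewrite gt_eqF.
  have : 0 < (Nn R p)^-1 by rewrite invr_gt0.
  lra.
- by move=> k; exact: g2_mean.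
- by move=> k a b; exact: g2_sq.
- by move=> w; exact: u2_decomp.
Qed.

Local Open Scope ring_scope.

Lemma OpN_from (R : realType) A (alpha beta : nat -> R) (X : forall p : nat, Omega p -> R) (C : R) :
  (forall p : nat, 0 <= alpha p) -> (forall p : nat, 0 <= beta p) ->
  (forall p : nat, alpha p + beta p <= 1) -> 0 < C ->
  (forall K : R, 0 < K -> exists P1 : nat, forall p : nat, (P1 <= p)%N ->
     0 < Nn R p /\ forall w : Omega p,
       `|u1hat R A p w - u1t R A p (alpha p) (beta p)| <= K / Num.sqrt (Nn R p) ->
       `|u2hat R A p w - u2t R A p (alpha p) (beta p)| <= K / Num.sqrt (Nn R p) ->
       `|X p w| <= C * (K / Num.sqrt (Nn R p))) ->
  OpN R alpha beta X.
Proof.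
move=> ha hb hab hC H eta heta.
pose K := 2 / eta + 1.
have hK1 : 1 <= K by rewrite /K lerDr divr_ge0 // ltW.
have hK : 0 < K by lra.
have [P1 HP] := H K hK.
exists (C * K); split; first by rewrite mulr_gt0.
exists P1 => p hp.
have [hN Hw] := HP p hp.
apply: le_trans (union_bd R p (alpha p) (beta p) _
   (fun w => K / Num.sqrt (Nn R p) < `|u1hat R A p w - u1t R A p (alpha p) (beta p)|)
   (fun w => K / Num.sqrt (Nn R p) < `|u2hat R A p w - u2t R A p (alpha p) (beta p)|)
   (ha p) (hb p) (hab p) _) _.
  move=> w /= hX; apply/negPn/negP; rewrite negb_or -!leNgt => /andP [h1 h2].
  have := Hw w h1 h2; rewrite mulrA leNgt; by rewrite hX.
apply: le_trans (lerD (P_D1 R A p _ _ K (ha p) (hb p) (hab p) hN hK)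
                      (P_D2 R A p _ _ K (ha p) (hb p) (hab p) hN hK)) _.
have hEK : eta * K = 2 + eta by rewrite /K; field; rewrite gt_eqF.
have hK2 : 0 < K ^+ 2 by rewrite exprn_gt0.
have -> : K ^-2 + K ^-2 = 2 / K ^+ 2 by rewrite /=; field; rewrite gt_eqF.
rewrite ler_pdivrMr //.
rewrite expr2; nra.
Qed.

Local Open Scope ring_scope.

Theorem proposition1 (R : realType) (A : forall p : nat, 'I_p -> 'I_p -> bool)
  (alpha beta : nat -> R)
  (Asym : forall (p : nat) (i j : 'I_p), A p i j = A p j i)
  (Adiag : forall (p : nat) (i : 'I_p), A p i i = false)
  (alpha_ge0 : forall p : nat, 0 <= alpha p)
  (beta_ge0 : forall p : nat, 0 <= beta p)
  (alpha_beta_le1 : forall p : nat, alpha p + beta p <= 1)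
  (HN1 : tends_to_infty R (fun p : nat => (p * p.-1)%N%:R * delta R A p))
  (HN2 : tends_to_infty R (fun p : nat => (p * p.-1)%N%:R * (1 - delta R A p))) :
  ((exists c : R, 0 < c /\ exists P0 : nat, forall p : nat, (P0 <= p)%N ->
        c <= delta R A p * (1 - alpha p - beta p) ^+ 2) ->
     OpN R alpha beta (fun p w =>
       beta_hat R (alpha p) (u1hat R A p w) (u2hat R A p w) - beta p) /\
     OpN R alpha beta (fun p w =>
       delta_hat_alpha R (alpha p) (u1hat R A p w) (u2hat R A p w) - delta R A p))
  /\
  ((exists c : R, 0 < c /\ exists P0 : nat, forall p : nat, (P0 <= p)%N ->
        c <= (1 - delta R A p) * (1 - alpha p - beta p) ^+ 2) ->
     OpN R alpha beta (fun p w =>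
       alpha_hat R (beta p) (u1hat R A p w) (u2hat R A p w) - alpha p) /\
     OpN R alpha beta (fun p w =>
       delta_hat_beta R (beta p) (u1hat R A p w) (u2hat R A p w) - delta R A p)).
Proof.
split; move=> [c [hc [P0 HP0]]];
  (have hC : 0 < 2 * 10 / c by apply: divr_gt0 => //; lra);
  split; apply: (OpN_from R A alpha beta _ (2 * 10 / c)) => //;
  move=> K hK; have [P2 HP2] := eps_small R A c K HN1 hc hK;
  exists (maxn P0 P2) => p; rewrite geq_max => /andP [hp0 hp2];
  have [hN he] := HP2 p hp2;
  split => // w /=;
  (have he0 : 0 <= K / Num.sqrt (Nn R p) by rewrite divr_ge0 ?sqrtr_ge0 // ltW);
  move: (u1hat R A p w) (u2hat R A p w) => U1 U2 h1 h2.
- have := det_i_beta R (alpha p) (beta p) (delta R A p) _ _ _ c (alpha_ge0 p) (beta_ge0 p)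
    (alpha_beta_le1 p) (delta_bd R A p) hc (HP0 p hp0) he h1 h2.
  by rewrite /u1t /u2t !subrKC.
- have := det_i_delta R (alpha p) (beta p) (delta R A p) _ _ _ c (alpha_ge0 p) (beta_ge0 p)
    (alpha_beta_le1 p) (delta_bd R A p) hc (HP0 p hp0) he0 he h1 h2.
  by rewrite /u1t /u2t !subrKC.
- have := det_ii_alpha R (alpha p) (beta p) (delta R A p) _ _ _ c (alpha_ge0 p) (beta_ge0 p)
    (alpha_beta_le1 p) (delta_bd R A p) hc (HP0 p hp0) he h1 h2.
  by rewrite /u1t /u2t !subrKC.
- have := det_ii_delta R (alpha p) (beta p) (delta R A p) _ _ _ c (alpha_ge0 p) (beta_ge0 p)
    (alpha_beta_le1 p) (delta_bd R A p) hc (HP0 p hp0) he0 he h1 h2.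
  by rewrite /u1t /u2t !subrKC.
Qed.
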